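(* Let $G$ be a graph that contains an induced subgraph $T$ isomorphic to the path $P_3$ on three vertices or to the triangle $C_3$, such that every vertex of $T$ has degree exactly $3$ in $G$. If $\chi_c^{\star}(G\setminus T)\leq 4$, then $\chi_c^{\star}(G)\leq 4$.
   Context: All graphs are finite and simple. $G\setminus T$ denotes the subgraph of $G$ induced by the vertices not in $T$. A correspondence-cover of a graph $G$ is a pair $(L,H)$ where $H$ is a graph and $L$ maps each $v\in V(G)$ to a subset $L(v)\subseteq V(H)$ such that: the sets $L(v)$ partition $V(H)$; each $L(v)$ induces a clique in $H$; if $uv\notin E(G)$ there are no edges of $H$ between $L(u)$ and $L(v)$; if $uv\in E(G)$ the edges of $H$ between $L(u)$ and $L(v)$ form a matching. The cover is $k$-fold if $|L(v)|=k$ for all $v$. An independent transversal of $(L,H)$ is an independent set of $H$ containing exactly one vertex of each $L(v)$. A $k$-fold cover has a packing if it has $k$ pairwise vertex-disjoint independent transversals. $\chi_c^{\star}(G)$ is the least $k\geq 1$ such that every $k$-fold correspondence-cover of $G$ has a packing. *)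

(* Defs.v *)
From mathcomp Require Import all_boot.
Set Implicit Arguments. Unset Strict Implicit. Unset Printing Implicit Defensive.

Definition simple_graph (V : finType) (e : rel V) : Prop :=
  symmetric e /\ irreflexive e.

Definition is_cover (V : finType) (e : rel V) (W : finType) (h : rel W)
    (L : V -> {set W}) : Prop :=
  [/\ simple_graph h,
      ((forall w : W, exists v : V, w \in L v) /\
       (forall u v : V, u != v -> [disjoint L u & L v])),
      (forall (v : V) (x y : W), x \in L v -> y \in L v -> x != y -> h x y),
      (forall (u v : V) (x y : W), u != v -> ~~ e u v ->
          x \in L u -> y \in L v -> ~~ h x y)
    &
      (forall (u v : V) (x : W), e u v -> x \in L u ->
          #|[set y in L v | h x y]| <= 1)].

Definition kfold (V W : finType) (L : V -> {set W}) (k : nat) : Prop :=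
  forall v, #|L v| = k.

Definition indep_transversal (V W : finType) (h : rel W) (L : V -> {set W})
    (I : {set W}) : Prop :=
  (forall x y, x \in I -> y \in I -> ~~ h x y) /\
  (forall v, #|I :&: L v| = 1).

Definition has_packing (V W : finType) (h : rel W) (L : V -> {set W})
    (k : nat) : Prop :=
  exists t : 'I_k -> {set W},
    (forall i, indep_transversal h L (t i)) /\
    (forall i j, i != j -> [disjoint t i & t j]).

Definition every_cover_packs (V : finType) (e : rel V) (k : nat) : Prop :=
  forall (W : finType) (h : rel W) (L : V -> {set W}),
    is_cover e h L -> kfold L k -> has_packing h L k.

(* chi_c^star(G) <= k : the least j >= 1 such that every j-fold cover has a
   packing exists and is <= k, i.e. some such j in [1, k] exists. *)
Definition chi_c_star_le (V : finType) (e : rel V) (k : nat) : Prop :=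
  exists2 j : nat, 0 < j <= k & every_cover_packs e j.

Definition del_vert (V : finType) (T : {set V}) := {x : V | x \notin T}.
Definition del_rel (V : finType) (e : rel V) (T : {set V}) : rel (del_vert T) :=
  fun x y => e (val x) (val y).
Arguments del_rel {V} e T.

(* Main.v *)
Require Import Defs.
From mathcomp Require Import all_boot all_fingroup.
Set Implicit Arguments. Unset Strict Implicit. Unset Printing Implicit Defensive.

Definition I4 := [:: 0; 1; 2; 3].
Definition P : seq (seq nat) := [:: [:: 0; 1; 2; 3]; [:: 0; 1; 3; 2]; [:: 0; 2; 1; 3]; [:: 0; 2; 3; 1]; [:: 0; 3; 1; 2]; [:: 0; 3; 2; 1]; [:: 1; 0; 2; 3]; [:: 1; 0; 3; 2]; [:: 1; 2; 0; 3]; [:: 1; 2; 3; 0]; [:: 1; 3; 0; 2]; [:: 1; 3; 2; 0]; [:: 2; 0; 1; 3]; [:: 2; 0; 3; 1]; [:: 2; 1; 0; 3]; [:: 2; 1; 3; 0]; [:: 2; 3; 0; 1]; [:: 2; 3; 1; 0]; [:: 3; 0; 1; 2]; [:: 3; 0; 2; 1]; [:: 3; 1; 0; 2]; [:: 3; 1; 2; 0]; [:: 3; 2; 0; 1]; [:: 3; 2; 1; 0]].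
Definition ap (s : seq nat) x := nth 0 s x.
Definition inv (s : seq nat) := map (fun y => index y s) I4.
Definition comp (s t : seq nat) := map (ap t) s.
Definition derange s := all (fun x => ap s x != x) I4.
Definition D : seq (seq nat) := [:: [:: 1; 0; 3; 2]; [:: 1; 2; 3; 0]; [:: 1; 3; 0; 2]; [:: 2; 0; 3; 1]; [:: 2; 3; 0; 1]; [:: 2; 3; 1; 0]; [:: 3; 0; 1; 2]; [:: 3; 2; 0; 1]; [:: 3; 2; 1; 0]].

Lemma lt4 x : x < 4 -> x \in I4.
Proof. by case: x => [|[|[|[|]]]]. Qed.
Lemma in4 x : x \in I4 -> x < 4.
Proof. by rewrite !inE => /or4P[]/eqP->. Qed.

Lemma chk_lt : all (fun s => all (fun x => ap s x < 4) I4) P. Proof. by vm_compute. Qed.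
Lemma chk_inj : all (fun s => all (fun x => all (fun y => (ap s x == ap s y) ==> (x == y)) I4) I4) P.
Proof. by vm_compute. Qed.
Lemma chk_inv : all (fun s => (inv s \in P) && all (fun x => (ap (inv s) (ap s x) == x) && (ap s (ap (inv s) x) == x)) I4) P.
Proof. by vm_compute. Qed.
Lemma chk_comp : all (fun s => all (fun t => (comp s t \in P) && all (fun x => ap (comp s t) x == ap t (ap s x)) I4) P) P.
Proof. by vm_compute. Qed.
Lemma chk_D : all (fun s => (s \in P) && derange s) D. Proof. by vm_compute. Qed.

Lemma chk_size : all (fun s => size s == 4) P. Proof. by vm_compute. Qed.
Lemma ap_lt s x : s \in P -> ap s x < 4.
Proof.
move=> sP; case: (ltnP x 4) => [/lt4 x4|x4].
  by move/allP: chk_lt => /(_ s sP)/allP/(_ x x4).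
rewrite /ap nth_default //; move/allP: chk_size => /(_ s sP)/eqP ->; exact: x4.
Qed.
Lemma ap_inj s x y : s \in P -> x < 4 -> y < 4 -> ap s x = ap s y -> x = y.
Proof.
move=> sP /lt4 x4 /lt4 y4 E; move/allP: chk_inj => /(_ s sP)/allP/(_ x x4)/allP/(_ y y4).
by rewrite E eqxx => /eqP.
Qed.
Lemma inv_P s : s \in P -> inv s \in P.
Proof. by move=> sP; move/allP: chk_inv => /(_ s sP)/andP[]. Qed.
Lemma invK s x : s \in P -> x < 4 -> ap (inv s) (ap s x) = x.
Proof. by move=> sP /lt4 x4; move/allP: chk_inv => /(_ s sP)/andP[_]/allP/(_ x x4)/andP[/eqP]. Qed.
Lemma invKV s x : s \in P -> x < 4 -> ap s (ap (inv s) x) = x.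
Proof. by move=> sP /lt4 x4; move/allP: chk_inv => /(_ s sP)/andP[_]/allP/(_ x x4)/andP[_ /eqP]. Qed.
Lemma comp_P s t : s \in P -> t \in P -> comp s t \in P.
Proof. by move=> sP tP; move/allP: chk_comp => /(_ s sP)/allP/(_ t tP)/andP[]. Qed.
Lemma apC s t x : s \in P -> t \in P -> x < 4 -> ap (comp s t) x = ap t (ap s x).
Proof. by move=> sP tP /lt4 x4; move/allP: chk_comp => /(_ s sP)/allP/(_ t tP)/andP[_]/allP/(_ x x4)/eqP. Qed.
Lemma D_P s : s \in D -> s \in P.
Proof. by move=> sD; move/allP: chk_D => /(_ s sD)/andP[]. Qed.
Lemma D_der s x : s \in D -> x < 4 -> ap s x != x.
Proof. by move=> sD /lt4 x4; move/allP: chk_D => /(_ s sD)/andP[_]/allP/(_ x x4). Qed.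

Definition cov1 (F : nat -> nat -> bool) :=
  exists2 s, s \in P & forall p i, p < 4 -> i < 4 -> F p i -> i = ap s p.
Definition cov2 (F : nat -> nat -> bool) :=
  exists s1 s2, [/\ s1 \in P, s2 \in P & forall p i, p < 4 -> i < 4 -> F p i -> i = ap s1 p \/ i = ap s2 p].

Definition Opts : seq (option nat) := [:: None; Some 0; Some 1; Some 2; Some 3].
Definition pinjo (f : seq (option nat)) := all (fun p => all (fun p' => [|| p == p', nth None f p == None | nth None f p != nth None f p']) I4) I4.
Definition extok (f : seq (option nat)) := has (fun s => all (fun p => if nth None f p is Some i then ap s p == i else true) I4) P.
Definition check3 := all (fun o0 => all (fun o1 => all (fun o2 => all (fun o3 => pinjo [:: o0; o1; o2; o3] ==> extok [:: o0; o1; o2; o3]) Opts) Opts) Opts) Opts.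
Lemma check3_ok : check3. Proof. by vm_compute. Qed.

Lemma ext (R : nat -> nat -> bool) :
  (forall p i i', p < 4 -> i < 4 -> i' < 4 -> R p i -> R p i' -> i = i') ->
  (forall p p' i, p < 4 -> p' < 4 -> i < 4 -> R p i -> R p' i -> p = p') -> cov1 R.
Proof.
move=> Hf Hi.
pose o p := if filter (R p) I4 is i :: _ then Some i else None.
have oSome p i : o p = Some i -> R p i /\ i < 4.
  rewrite /o; case E: (filter (R p) I4) => [|j s] //= [<-].
  have : j \in filter (R p) I4 by rewrite E inE eqxx.
  by rewrite mem_filter => /andP[-> /in4].
have oO p : o p \in Opts.
  case E: (o p) => [i|]; last by [].
  by have [_] := oSome _ _ E; case: i {E} => [|[|[|[|]]]].
have := check3_ok; rewrite /check3.
move=> /allP/(_ _ (oO 0))/allP/(_ _ (oO 1))/allP/(_ _ (oO 2))/allP/(_ _ (oO 3)).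
have nthE p : p < 4 -> nth None [:: o 0; o 1; o 2; o 3] p = o p.
  by case: p => [|[|[|[|]]]].
move/implyP => Himp.
have : extok [:: o 0; o 1; o 2; o 3].
  apply: Himp; apply/allP => p /in4 p4; apply/allP => p' /in4 p'4; rewrite !nthE //.
  case: eqP => //= ne; case E: (o p) => [i|] //=; case E': (o p') => [i'|] //=.
  apply/negP => /eqP [ii]; subst i'.
  have [R1 i4] := oSome _ _ E; have [R2 _] := oSome _ _ E'.
  by apply: ne; apply: Hi R1 R2.
case/hasP => s sP /allP Hs; exists s => // p i p4 i4 Rpi.
have := Hs p (lt4 p4); rewrite nthE //.
case E: (o p) => [j|]; last first.
  move: E; rewrite /o; have : i \in filter (R p) I4 by rewrite mem_filter Rpi lt4.
  by case: (filter _ _).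
have [Rpj j4] := oSome _ _ E; move/eqP=> ->; exact: Hf Rpi Rpj.
Qed.

Lemma ap_neq s x y : s \in P -> x < 4 -> y < 4 -> x != y -> ap s x != ap s y.
Proof. by move=> sP x4 y4; apply: contra => /eqP /(ap_inj sP x4 y4) ->. Qed.
Lemma ap_swap s y z : s \in P -> z < 4 -> ap s z = y -> z = ap (inv s) y.
Proof. by move=> sP z4 <-; rewrite invK. Qed.

#[export] Hint Resolve ap_lt comp_P inv_P D_P : core.
Ltac rw1 L := rewrite L; [ | solve [auto] .. ].
Ltac simp := repeat first [rw1 apC | rw1 invK | rw1 invKV].

Definition goodA p1 p2 tb := has (fun ta => all (fun x => [&& ap ta x != ap p1 x, ap ta x != ap p2 x & ap ta x != ap tb x]) I4) P.
Definition check1 := all (fun p1 => all (fun p2 => 5 <= count (goodA p1 p2) D) P) P.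
Lemma check1_ok : check1. Proof. by vm_compute. Qed.

Definition avoid2 p q ta := all (fun x => (ap ta x != ap p x) && (ap ta x != ap q x)) I4.
Lemma check2_ok : all (fun pa => all (fun pc => all (fun mu =>
  has (fun tb => let As := filter (avoid2 pa tb) P in let Cs := filter (avoid2 pc tb) P in
      has (fun ta => has (fun tc => all (fun x => ap ta x != ap tc (ap mu x)) I4) Cs) As) D) P) P) P.
Proof. vm_compute. reflexivity. Qed.

Lemma check2_use pa pc mu : pa \in P -> pc \in P -> mu \in P ->
  exists tb ta tc, [/\ tb \in D, ta \in P & tc \in P] /\ [/\
    (forall x, x \in I4 -> (ap ta x != ap pa x) && (ap ta x != ap tb x)),
    (forall x, x \in I4 -> (ap tc x != ap pc x) && (ap tc x != ap tb x)) &
    (forall x, x \in I4 -> ap ta x != ap tc (ap mu x))].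
Proof.
move=> ha hc hm.
move/allP: check2_ok => /(_ pa ha)/allP/(_ pc hc)/allP/(_ mu hm).
case/hasP => tb tbD /hasP[ta]; rewrite mem_filter => /andP[/allP gA taP].
case/hasP => tc; rewrite mem_filter => /andP[/allP gC tcP] /allP gAC.
by exists tb, ta, tc; split; split.
Qed.

Lemma pig (T : eqType) (A B : pred T) (s : seq T) :
  5 <= count A s -> 5 <= count B s -> size s = 9 -> has (predI A B) s.
Proof.
move=> hA hB hs; rewrite has_count.
have := count_predUI A B s; have := count_size (predU A B) s; rewrite hs.
move=> h1 h2; rewrite lt0n; apply/eqP => h0; move: h2; rewrite h0 addn0.
move=> h2; have : 10 <= count A s + count B s by rewrite (leq_add hA hB).
by rewrite -h2 => /(leq_trans)/(_ h1).
Qed.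

Theorem core_P3 (Fa Fb Fc Mab Mbc : nat -> nat -> bool) :
  cov2 Fa -> cov1 Fb -> cov2 Fc -> cov1 Mab -> cov1 Mbc ->
  exists sa sb sc, [/\ sa \in P, sb \in P, sc \in P,
    (forall p, p < 4 -> ~~ Fa p (ap sa p)) /\ (forall p, p < 4 -> ~~ Fb p (ap sb p)) /\
    (forall p, p < 4 -> ~~ Fc p (ap sc p)) &
    (forall p q, p < 4 -> q < 4 -> Mab p q -> ap sa p != ap sb q) /\
    (forall q r, q < 4 -> r < 4 -> Mbc q r -> ap sb q != ap sc r)].
Proof.
move=> [p1 [p2 [p1P p2P HFa]]] [pb pbP HFb] [q1 [q2 [q1P q2P HFc]]] [rab rabP HMab] [rbc rbcP HMbc].
pose p1' := comp (comp (inv rab) p1) (inv pb).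
pose p2' := comp (comp (inv rab) p2) (inv pb).
pose q1' := comp (comp rbc q1) (inv pb).
pose q2' := comp (comp rbc q2) (inv pb).
have p1'P : p1' \in P by rewrite /p1'; auto.
have p2'P : p2' \in P by rewrite /p2'; auto.
have q1'P : q1' \in P by rewrite /q1'; auto.
have q2'P : q2' \in P by rewrite /q2'; auto.
have c1 : 5 <= count (goodA p1' p2') D.
  by have H := check1_ok; rewrite /check1 in H; move/allP: H => /(_ p1' p1'P)/allP/(_ p2' p2'P).
have c2 : 5 <= count (goodA q1' q2') D.
  by have H := check1_ok; rewrite /check1 in H; move/allP: H => /(_ q1' q1'P)/allP/(_ q2' q2'P).
have /hasP[tb tbD /andP[gA gC]] := pig c1 c2 (erefl _).
have tbP := D_P tbD.
case/hasP: gA => ta taP /allP gA.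
case/hasP: gC => tc tcP /allP gC.
exists (comp (comp rab ta) pb), (comp tb pb), (comp (comp (inv rbc) tc) pb).
split; auto; first split; last split.
- move=> p p4; apply/negP => /HFa; move=> /(_ p4) H.
  have {}H := H (ap_lt _ (comp_P (comp_P rabP taP) pbP)).
  have {H} : ap pb (ap ta (ap rab p)) = ap p1 p \/ ap pb (ap ta (ap rab p)) = ap p2 p.
    by move: H; simp.
  have /and3P[n1 n2 _] := gA _ (lt4 (ap_lt p rabP)).
  move: n1 n2; rewrite /p1' /p2'; simp => n1 n2.
  by case=> /(ap_swap pbP (ap_lt _ taP)) E; [move: n1 | move: n2]; rewrite E eqxx.
- split.
  + move=> p p4; apply/negP => /HFb; move=> /(_ p4) H.
    move: {H} (H (ap_lt _ (comp_P tbP pbP))).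
    simp => /(ap_inj pbP (ap_lt _ tbP) p4) /eqP.
    by rewrite (negbTE (D_der tbD p4)).
  + move=> p p4; apply/negP => /HFc; move=> /(_ p4) H.
    have {}H := H (ap_lt _ (comp_P (comp_P (inv_P rbcP) tcP) pbP)).
    have {H} : ap pb (ap tc (ap (inv rbc) p)) = ap q1 p \/ ap pb (ap tc (ap (inv rbc) p)) = ap q2 p.
      by move: H; simp.
    have /and3P[n1 n2 _] := gC _ (lt4 (ap_lt p (inv_P rbcP))).
    move: n1 n2; rewrite /q1' /q2'; simp => n1 n2.
    by case=> /(ap_swap pbP (ap_lt _ tcP)) E; [move: n1 | move: n2]; rewrite E eqxx.
- move=> p q p4 q4 /HMab -/(_ p4 q4) ->; simp.
  apply: ap_neq; auto.
  by have /and3P[_ _] := gA _ (lt4 (ap_lt p rabP)).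
- move=> q r q4 r4 /HMbc -/(_ q4 r4) ->; simp.
  apply: ap_neq; auto.
  have /and3P[_ _] := gC _ (lt4 q4).
  by rewrite eq_sym.
Qed.

Theorem core_C3 (Fa Fb Fc Mab Mbc Mac : nat -> nat -> bool) :
  cov1 Fa -> cov1 Fb -> cov1 Fc -> cov1 Mab -> cov1 Mbc -> cov1 Mac ->
  exists sa sb sc, [/\ sa \in P, sb \in P, sc \in P,
    (forall p, p < 4 -> ~~ Fa p (ap sa p)) /\ (forall p, p < 4 -> ~~ Fb p (ap sb p)) /\
    (forall p, p < 4 -> ~~ Fc p (ap sc p)) &
    (forall p q, p < 4 -> q < 4 -> Mab p q -> ap sa p != ap sb q) /\
    (forall q r, q < 4 -> r < 4 -> Mbc q r -> ap sb q != ap sc r) /\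
    (forall p r, p < 4 -> r < 4 -> Mac p r -> ap sa p != ap sc r)].
Proof.
move=> [pa paP HFa] [pb pbP HFb] [pc pcP HFc] [rab rabP HMab] [rbc rbcP HMbc] [rac racP HMac].
pose pa' := comp (comp (inv rab) pa) (inv pb).
pose pc' := comp (comp rbc pc) (inv pb).
pose mu := comp (comp (inv rab) rac) (inv rbc).
have pa'P : pa' \in P by rewrite /pa'; auto.
have pc'P : pc' \in P by rewrite /pc'; auto.
have muP : mu \in P by rewrite /mu; auto.
have [tb [ta [tc [[tbD taP tcP] [gA gC gAC]]]]] := check2_use pa'P pc'P muP.
have tbP := D_P tbD.
exists (comp (comp rab ta) pb), (comp tb pb), (comp (comp (inv rbc) tc) pb).
split; auto; first split; last split; last split.
- move=> p p4; apply/negP => /HFa; move=> /(_ p4) H.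
  have {}H := H (ap_lt _ (comp_P (comp_P rabP taP) pbP)).
  have {H} : ap pb (ap ta (ap rab p)) = ap pa p by move: H; simp.
  have /andP[n1 _] := gA _ (lt4 (ap_lt p rabP)).
  move: n1; rewrite /pa'; simp => n1.
  by move=> /(ap_swap pbP (ap_lt _ taP)) E; move: n1; rewrite E eqxx.
- split.
  + move=> p p4; apply/negP => /HFb; move=> /(_ p4) H.
    move: {H} (H (ap_lt _ (comp_P tbP pbP))).
    simp => /(ap_inj pbP (ap_lt _ tbP) p4) /eqP.
    by rewrite (negbTE (D_der tbD p4)).
  + move=> p p4; apply/negP => /HFc; move=> /(_ p4) H.
    have {}H := H (ap_lt _ (comp_P (comp_P (inv_P rbcP) tcP) pbP)).
    have {H} : ap pb (ap tc (ap (inv rbc) p)) = ap pc p by move: H; simp.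
    have /andP[n1 _] := gC _ (lt4 (ap_lt p (inv_P rbcP))).
    move: n1; rewrite /pc'; simp => n1.
    by move=> /(ap_swap pbP (ap_lt _ tcP)) E; move: n1; rewrite E eqxx.
- move=> p q p4 q4 /HMab -/(_ p4 q4) ->; simp.
  apply: ap_neq; auto.
  by have /andP[_] := gA _ (lt4 (ap_lt p rabP)).
- move=> q r q4 r4 /HMbc -/(_ q4 r4) ->; simp.
  apply: ap_neq; auto.
  have /andP[_] := gC _ (lt4 q4).
  by rewrite eq_sym.
- move=> p r p4 r4 /HMac -/(_ p4 r4) ->; simp.
  apply: ap_neq; auto.
  have := gAC _ (lt4 (ap_lt p rabP)).
  by rewrite /mu; simp.
Qed.

Lemma disjP (T : finType) (A B : {set T}) :
  (forall x, x \in A -> x \in B -> False) -> [disjoint A & B].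
Proof.
move=> H; rewrite -setI_eq0; apply/eqP/setP => x; rewrite !inE.
by apply/negP => /andP[] /H h /h.
Qed.

Lemma le1_eq (T : finType) (A : {set T}) x y : #|A| <= 1 -> x \in A -> y \in A -> x = y.
Proof. by move/card_le1_eqP => H xA yA; apply: H. Qed.

Section CoverFacts.
Variables (V W : finType) (e : rel V) (h : rel W) (L : V -> {set W}).
Hypothesis Hcov : is_cover e h L.

Lemma cov_sym x y : h x y = h y x.
Proof. by case: Hcov => [[hs _] _ _ _ _]; apply: hs. Qed.
Lemma cov_irr x : h x x = false.
Proof. by case: Hcov => [[_ hi] _ _ _ _]; apply: hi. Qed.
Lemma cov_ex w : exists v, w \in L v.
Proof. by case: Hcov => _ [H _] _ _ _; apply: H. Qed.
Lemma cov_uniq u v w : w \in L u -> w \in L v -> u = v.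
Proof.
case: Hcov => _ [_ H] _ _ _ wu wv; apply/eqP; apply/negPn/negP => /H d.
by rewrite (disjointFr d wu) in wv.
Qed.
Lemma cov_non u v x y : u != v -> ~~ e u v -> x \in L u -> y \in L v -> ~~ h x y.
Proof. by case: Hcov => _ _ _ H _; apply: H. Qed.
Lemma cov_match u v x y y' : e u v -> x \in L u -> y \in L v -> y' \in L v -> h x y -> h x y' -> y = y'.
Proof.
case: Hcov => _ _ _ _ H euv xu yv y'v hy hy'.
by apply: (le1_eq (H _ _ _ euv xu)); rewrite inE ?yv ?y'v.
Qed.
End CoverFacts.

Section Restrict.
Variables (V V' W : finType) (e : rel V) (h : rel W) (L : V -> {set W}).
Variables (f : V' -> V) (L0 : V' -> {set W}).
Hypothesis f_inj : injective f.
Hypothesis L0sub : forall v, L0 v \subset L (f v).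
Hypothesis Hcov : is_cover e h L.

Definition Sr := \bigcup_(v : V') L0 v.
Definition Wr := {w : W | w \in Sr}.
Definition hr : rel Wr := fun x y => h (val x) (val y).
Definition Lr (v : V') : {set Wr} := [set w | val w \in L0 v].
Definition er : rel V' := fun x y => e (f x) (f y).

Lemma Lr_img v : val @: Lr v = L0 v.
Proof.
apply/setP => w; apply/imsetP/idP => [[x]|wL].
  by rewrite inE => xL ->.
have wS : w \in Sr by apply/bigcupP; exists v.
by exists (exist _ w wS); rewrite ?inE.
Qed.

Lemma L0L v w : w \in L0 v -> w \in L (f v).
Proof. by move=> H; apply: (subsetP (L0sub v)). Qed.

Lemma restr_cover : is_cover er hr Lr.
Proof.
split.
- split; first by move=> x y; rewrite /hr (cov_sym Hcov).
  by move=> x; rewrite /hr (cov_irr Hcov).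
- split.
    move=> [w wS]; case/bigcupP: (wS) => v _ wv; exists v; by rewrite inE.
  move=> u v nuv; apply: disjP => x; rewrite !inE => /L0L xu /L0L xv.
  by move: nuv; rewrite (f_inj (cov_uniq Hcov xu xv)) eqxx.
- move=> v x y; rewrite !inE /hr => /L0L xv /L0L yv nxy.
  by case: Hcov => _ _ H _ _; apply: (H _ _ _ xv yv); apply: contra nxy => /eqP/val_inj ->.
- move=> u v x y nuv neuv; rewrite !inE /hr => /L0L xu /L0L yv.
  apply: (cov_non Hcov _ neuv xu yv).
  by apply: contra nuv => /eqP/f_inj ->.
- move=> u v x euv; rewrite inE => /L0L xu.
  rewrite -(card_imset _ val_inj).
  case: Hcov => _ _ _ _ H; apply: leq_trans (H _ _ _ euv xu).
  apply: subset_leq_card; apply/subsetP => w /imsetP[y]; rewrite !inE /hr => /andP[yv hy] ->.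
  by rewrite (L0L yv) hy.
Qed.

Lemma restr_kfold k : (forall v, #|L0 v| = k) -> kfold Lr k.
Proof. by move=> H v; rewrite -(card_imset _ val_inj) Lr_img. Qed.

Lemma restr_pack k : has_packing hr Lr k ->
  exists t : 'I_k -> {set W},
    [/\ (forall i x y, x \in t i -> y \in t i -> ~~ h x y),
        (forall i v, #|t i :&: L0 v| = 1),
        (forall i j, i != j -> [disjoint t i & t j]) &
        (forall i, t i \subset Sr)].
Proof.
case=> t [Hind Hdis]; exists (fun i => val @: t i); split.
- move=> i x y /imsetP[x' xt ->] /imsetP[y' yt ->].
  by case: (Hind i) => H _; apply: H.
- move=> i v; case: (Hind i) => _ H; rewrite -(H v) -Lr_img -imsetI.
    by rewrite card_imset //; apply: val_inj.
  by move=> x y _ _; apply: val_inj.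
- move=> i j nij; apply: disjP => w /imsetP[x xt ->] /imsetP[y yt /val_inj E].
  by move: (Hdis _ _ nij) => /disjointFr/(_ xt); rewrite E yt.
- by move=> i; apply/subsetP => w /imsetP[x _ ->]; apply: valP.
Qed.
End Restrict.

Lemma restrict_use (V V' W : finType) (e : rel V) (h : rel W) (L : V -> {set W})
  (f : V' -> V) (L0 : V' -> {set W}) k :
  injective f -> (forall v, L0 v \subset L (f v)) -> is_cover e h L ->
  (forall v, #|L0 v| = k) -> every_cover_packs (er e f) k ->
  exists t : 'I_k -> {set W},
    [/\ (forall i x y, x \in t i -> y \in t i -> ~~ h x y),
        (forall i v, #|t i :&: L (f v)| = 1),
        (forall i j, i != j -> [disjoint t i & t j]) &
        (forall i, t i \subset Sr L0)].
Proof.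
move=> finj sub Hcov Hk Hp.
have := Hp _ _ _ (restr_cover finj sub Hcov) (restr_kfold Hk).
case/restr_pack => t [H1 H2 H3 H4]; exists t; split => // i v.
rewrite -(H2 i v); apply: eq_card => w; rewrite !inE.
case wt: (w \in t i) => //=; apply/idP/idP; last by move/(subsetP (sub v)).
move=> wv; move/subsetP: (H4 i) => /(_ w wt) /bigcupP[u _ wu].
have wu' := subsetP (sub u) _ wu.
by rewrite -(finj _ _ (cov_uniq Hcov wu' wv)).
Qed.

Lemma mono (V : finType) (e : rel V) k :
  0 < k -> every_cover_packs e k -> every_cover_packs e k.+1.
Proof.
move=> k0 Hk W h L Hcov Hkf.
pose L1 v := if [pick x in L v] is Some x then L v :\ x else L v.
have sub1 v : L1 v \subset L (id v).
  by rewrite /L1; case: pickP => [x _|_] //; apply: subsetDl.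
have card1 v : #|L1 v| = k.
  rewrite /L1; case: pickP => [x xL|none].
    by have := cardsD1 x (L v); rewrite xL Hkf add1n => -[].
  by have := Hkf v; move/eqP; rewrite eq_card0.
have [t1 [I1 C1 _ _]] := restrict_use (inj_id (A:=V)) sub1 Hcov card1 Hk.
pose I0 := t1 (Ordinal k0).
pose L2 v := L v :\: I0.
have sub2 v : L2 v \subset L (id v) by apply: subsetDl.
have card2 v : #|L2 v| = k.
  by rewrite /L2 cardsD setIC C1 Hkf subn1.
have [t2 [I2 C2 D2 S2]] := restrict_use (inj_id (A:=V)) sub2 Hcov card2 Hk.
have dis0 j w : w \in t2 j -> w \in I0 -> False.
  move=> wt wI; move/subsetP: (S2 j) => /(_ w wt) /bigcupP[u _].
  by rewrite /L2 inE wI.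
exists (fun i => if unlift ord_max i is Some j then t2 j else I0); split.
- move=> i; case: unliftP => [j _|_]; split; [exact: I2 | exact: (C2 j) | exact: I1 | exact: C1].
- move=> i i' nii'; case: unliftP => [j Ei|Ei]; case: unliftP => [j' Ei'|Ei'].
  + apply: D2; by apply: contra nii' => /eqP jj; rewrite Ei Ei' jj.
  + by apply: disjP => w /dis0 H /H.
  + by apply: disjP => w H /dis0 /(_ H).
  + by rewrite Ei Ei' eqxx in nii'.
Qed.

Lemma mono_le (V : finType) (e : rel V) j k :
  0 < j -> j <= k -> every_cover_packs e j -> every_cover_packs e k.
Proof.
move=> j0; elim: k => [|k IH]; first by rewrite leqn0 => /eqP j00; rewrite j00 in j0.
rewrite leq_eqVlt => /orP[/eqP <- //|]; rewrite ltnS => jk Hj.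
apply: mono; first exact: leq_trans jk.
exact: IH.
Qed.

Lemma assemble (V W : finType) (e : rel V) (h : rel W) (L : V -> {set W}) (T : {set V})
  (t0 : 'I_4 -> {set W}) (lab : V -> 'I_4 -> W) (sg : V -> 'S_4) :
  is_cover e h L ->
  (forall i x y, x \in t0 i -> y \in t0 i -> ~~ h x y) ->
  (forall i u, u \notin T -> #|t0 i :&: L u| = 1) ->
  (forall i j, i != j -> [disjoint t0 i & t0 j]) ->
  (forall i w, w \in t0 i -> exists2 u, u \notin T & w \in L u) ->
  (forall x, injective (lab x)) -> (forall x p, lab x p \in L x) ->
  (forall x p u y, x \in T -> u \notin T -> e x u -> y \in t0 (sg x p) -> y \in L u -> ~~ h (lab x p) y) ->
  (forall x y p q, x \in T -> y \in T -> x != y -> h (lab x p) (lab y q) -> sg x p != sg y q) ->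
  has_packing h L 4.
Proof.
move=> Hcov I0 C0 D0 S0 linj lin H2 H3.
pose q x i := ((sg x)^-1)%g i.
have qK x i : sg x (q x i) = i by rewrite /q permKV.
have A i w x : w \in t0 i -> w \in L x -> x \in T -> False.
  move=> wt wx xT; case: (S0 i w wt) => u uT wu.
  by move: uT; rewrite (cov_uniq Hcov wu wx) xT.
have mixed z p w : z \in T -> w \in t0 (sg z p) -> ~~ h (lab z p) w.
  move=> zT wt; case: (S0 _ w wt) => u uT wu.
  case ezu: (e z u); first exact: H2 zT uT ezu wt wu.
  apply: (cov_non Hcov _ _ (lin z p) wu); last by rewrite ezu.
  by apply: contra uT => /eqP <-.
pose t i := t0 i :|: [set lab x (q x i) | x in T].
have tP i w : w \in t i -> w \in t0 i \/ exists2 x, x \in T & w = lab x (q x i).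
  by rewrite inE => /orP[|/imsetP[x xT ->]]; [left | right; exists x].
exists t; split.
- move=> i; split.
    move=> x y /tP[xt|[z zT ->]] /tP[yt|[z' z'T ->]].
    + exact: I0 xt yt.
    + by rewrite (cov_sym Hcov); apply: mixed; rewrite // qK.
    + by apply: mixed; rewrite // qK.
    + case: (eqVneq z z') => [<-|nzz]; first by rewrite (cov_irr Hcov).
      apply/negP => /(H3 _ _ _ _ zT z'T nzz); by rewrite !qK eqxx.
  move=> v; case vT: (v \in T).
    rewrite -(cards1 (lab v (q v i))); apply: eq_card => w; rewrite in_setI in_set1.
    apply/andP/eqP => [[/tP[wt|[x xT ->]] wv]|->].
    + by case: (A _ _ _ wt wv vT).
    + by rewrite (cov_uniq Hcov (lin x _) wv).
    + by split; [rewrite in_setU; apply/orP; right; apply/imsetP; exists v | apply: lin].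
  rewrite -(C0 i v (negbT vT)); apply: eq_card => w; rewrite !inE.
  case wv: (w \in L v); rewrite ?andbF ?andbT //.
  apply/orP/idP => [[//|/imsetP[x xT E]]|->]; last by left.
  have lv : lab x (q x i) \in L v by rewrite -E.
  by move: vT; rewrite -(cov_uniq Hcov (lin x _) lv) xT.
- move=> i j nij; apply: disjP => w /tP[wi|[x xT ->]] /tP[wj|[y yT E]].
  + by move/disjointFr: (D0 _ _ nij) => /(_ _ wi); rewrite wj.
  + by apply: (A _ _ y wi _ yT); rewrite E lin.
  + exact: (A _ _ x wj (lin _ _) xT).
  + have ly : lab x (q x i) \in L y by rewrite E lin.
    have E' := cov_uniq Hcov (lin x _) ly.
    move: E; rewrite E' => /linj /(congr1 (sg y)); rewrite !qK => ij.
    by rewrite ij eqxx in nij.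
Qed.

Lemma lab_props (V W : finType) (L : V -> {set W}) (w0 : W) : kfold L 4 ->
  (forall x, injective (fun p : 'I_4 => nth w0 (enum (L x)) p)) /\
  (forall x (p : 'I_4), nth w0 (enum (L x)) p \in L x).
Proof.
move=> Hk; have sz x : size (enum (L x)) = 4 by rewrite -cardE Hk.
split.
  move=> x p q /eqP; rewrite nth_uniq ?sz ?ltn_ord ?enum_uniq //.
  by move/eqP/val_inj.
by move=> x p; rewrite -mem_enum mem_nth // sz ltn_ord.
Qed.

Lemma toS s : s \in P -> exists sg : 'S_4, forall p : 'I_4, val (sg p) = ap s p.
Proof.
move=> sP.
have finj : injective (fun p : 'I_4 => inord (ap s p) : 'I_4).
  move=> p q /(congr1 val) /=; rewrite !inordK ?(ap_lt _ sP) //.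
  by move/(ap_inj sP (ltn_ord p) (ltn_ord q))/val_inj.
by exists (perm finj) => p; rewrite permE /= inordK // (ap_lt _ sP).
Qed.

Definition pinj (R : nat -> nat -> bool) :=
  (forall p i i', p < 4 -> i < 4 -> i' < 4 -> R p i -> R p i' -> i = i') /\
  (forall p p' i, p < 4 -> p' < 4 -> i < 4 -> R p i -> R p' i -> p = p').

Lemma cov_from2 (U : finType) (N : {set U}) (R : U -> nat -> nat -> bool) (F : nat -> nat -> bool) :
  #|N| <= 2 -> (forall u, u \in N -> pinj (R u)) ->
  (forall p i, p < 4 -> i < 4 -> F p i -> exists2 u, u \in N & R u p i) -> cov2 F.
Proof.
move=> Nle Hp HF.
have ext' u : u \in N -> cov1 (R u) by move=> uN; case: (Hp u uN) => ? ?; apply: ext.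
have id4 : [:: 0; 1; 2; 3] \in P by [].
have mE u : (u \in N) = (u \in enum N) by rewrite mem_enum.
move: Nle; rewrite cardE.
case E: (enum N) => [|u1 [|u2 [|u3 s]]] //= _.
- exists [:: 0; 1; 2; 3], [:: 0; 1; 2; 3]; split => // p i p4 i4 /HF-/(_ p4 i4) [u].
  by rewrite mE E.
- have [s1 s1P H1] := ext' u1 (ltac:(by rewrite mE E inE)).
  exists s1, s1; split => // p i p4 i4 Fpi; case: (HF p i p4 i4 Fpi) => u.
  by rewrite mE E inE => /eqP -> Ru; left; exact: H1.
- have [s1 s1P H1] := ext' u1 (ltac:(by rewrite mE E inE eqxx)).
  have [s2 s2P H2] := ext' u2 (ltac:(by rewrite mE E !inE eqxx orbT)).
  exists s1, s2; split => // p i p4 i4 Fpi; case: (HF p i p4 i4 Fpi) => u.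
  rewrite mE E !inE => /orP[] /eqP -> Ru; [left; exact: H1 | right; exact: H2].
Qed.

Lemma cov_from1 (U : finType) (N : {set U}) (R : U -> nat -> nat -> bool) (F : nat -> nat -> bool) :
  #|N| <= 1 -> (forall u, u \in N -> pinj (R u)) ->
  (forall p i, p < 4 -> i < 4 -> F p i -> exists2 u, u \in N & R u p i) -> cov1 F.
Proof.
move=> Nle Hp HF.
have ext' u : u \in N -> cov1 (R u) by move=> uN; case: (Hp u uN) => ? ?; apply: ext.
have id4 : [:: 0; 1; 2; 3] \in P by [].
have mE u : (u \in N) = (u \in enum N) by rewrite mem_enum.
move: Nle; rewrite cardE.
case E: (enum N) => [|u1 [|u2 s]] //= _.
- exists [:: 0; 1; 2; 3] => // p i p4 i4 /HF-/(_ p4 i4) [u].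
  by rewrite mE E.
- have [s1 s1P H1] := ext' u1 (ltac:(by rewrite mE E inE)).
  exists s1 => // p i p4 i4 Fpi; case: (HF p i p4 i4 Fpi) => u.
  by rewrite mE E inE => /eqP -> Ru; exact: H1.
Qed.

Lemma nb2 (V : finType) (e : rel V) (T : {set V}) x y :
  #|[set z | e x z]| = 3 -> e x y -> y \in T -> #|[set u | e x u & u \notin T]| <= 2.
Proof.
move=> d3 exy yT.
have : #|[set z | e x z] :\ y| = 2.
  by have := cardsD1 y [set z | e x z]; rewrite d3 inE exy add1n => -[].
move=> <-; apply: subset_leq_card; apply/subsetP => u; rewrite !inE => /andP[-> uT].
by rewrite andbT; apply: contra uT => /eqP ->.
Qed.

Lemma nb1 (V : finType) (e : rel V) (T : {set V}) x y z :
  #|[set w | e x w]| = 3 -> e x y -> e x z -> y != z -> y \in T -> z \in T ->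
  #|[set u | e x u & u \notin T]| <= 1.
Proof.
move=> d3 exy exz nyz yT zT.
have c2 : #|[set w | e x w] :\ y| = 2.
  by have := cardsD1 y [set w | e x w]; rewrite d3 inE exy add1n => -[].
have : #|([set w | e x w] :\ y) :\ z| = 1.
  have := cardsD1 z ([set w | e x w] :\ y); rewrite c2 !inE exz eq_sym nyz /=.
  by rewrite add1n => -[].
move=> <-; apply: subset_leq_card; apply/subsetP => u; rewrite !inE => /andP[-> uT].
rewrite !andbT; apply/andP; split; apply: contra uT => /eqP -> //.
Qed.

Theorem mainTheorem6 (V : finType) (e : rel V) (He : simple_graph e)
    (a b c : V) :
  uniq [:: a; b; c] ->
  e a b -> e b c ->
  (* T = {a,b,c} induces P3 (if ~~ e a c) or C3 (if e a c) *)
  (~~ e a c \/ e a c) ->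
  (forall x, x \in [set a; b; c] -> #|[set y | e x y]| = 3) ->
  chi_c_star_le (del_rel e [set a; b; c]) 4 ->
  chi_c_star_le e 4.
Proof.
move=> Hu eab ebc Hac Hdeg [j /andP[j0 j4] Hj].
exists 4 => //.
move=> W h L Hcov Hkf.
set T := [set a; b; c].
have Hj4 := mono_le j0 j4 Hj.
have [t0 [I0 C0 D0 S0]] := @restrict_use V (del_vert T) W e h L val (fun v => L (val v)) 4
   val_inj (fun v => subxx _) Hcov (fun v => Hkf _) Hj4.
have C0' i u : u \notin T -> #|t0 i :&: L u| = 1 by move=> uT; exact: (C0 i (exist _ u uT)).
have S0' i w : w \in t0 i -> exists2 u, u \notin T & w \in L u.
  move=> wt; move/subsetP: (S0 i) => /(_ w wt) /bigcupP[v _ wv].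
  by exists (val v) => //; exact: (valP v).
have [w0 _] : exists w0, w0 \in L a by apply/set0Pn; rewrite -card_gt0 Hkf.
pose lab x (p : 'I_4) := nth w0 (enum (L x)) p.
have [linj lin] := lab_props w0 Hkf.
case: He => esym _.
move: Hu => /= /andP[]; rewrite !inE negb_or => /andP[nab nac] /andP[nbc _].
have aT : a \in T by rewrite !inE eqxx.
have bT : b \in T by rewrite !inE eqxx orbT.
have cT : c \in T by rewrite !inE eqxx orbT.
pose F (t : V) (p i : 'I_4) := [exists u, [&& u \notin T, e t u &
        [exists y, [&& y \in t0 i, y \in L u & h (lab t p) y]]]].
pose Fn t p i := F t (inord p) (inord i).
pose Rn t u p i := [exists y, [&& y \in t0 (inord i), y \in L u & h (lab t (inord p)) y]].
pose Mn x y p q := h (lab x (inord p)) (lab y (inord q)).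
pose N t := [set u | e t u & u \notin T].
have pinjR t u : u \in N t -> pinj (Rn t u).
  rewrite inE => /andP[etu uT]; split.
    move=> p i i' p4 i4 i'4 /existsP[y /and3P[yt yu hy]] /existsP[y' /and3P[yt' yu' hy']].
    have yy := cov_match Hcov etu (lin t _) yu yu' hy hy'; subst y'.
    have : inord i = inord i' :> 'I_4.
      apply/eqP; apply/negPn/negP => ne; move/disjointFr: (D0 _ _ ne) => /(_ _ yt).
      by rewrite yt'.
    by move/(congr1 (@nat_of_ord 4)); rewrite !inordK.
  move=> p p' i p4 p'4 i4 /existsP[y /and3P[yt yu hy]] /existsP[y' /and3P[yt' yu' hy']].
  have yy : y = y'.
    by apply: (le1_eq (A := t0 (inord i) :&: L u)); rewrite ?C0' // inE ?yt ?yt' ?yu ?yu'.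
  subst y'.
  have eut : e u t by rewrite esym.
  rewrite (cov_sym Hcov) in hy; rewrite (cov_sym Hcov) in hy'.
  have := cov_match Hcov eut yu (lin t _) (lin t _) hy hy'.
  by move/linj/(congr1 (@nat_of_ord 4)); rewrite !inordK.
have pinjM x y : e x y -> pinj (Mn x y).
  move=> exy; split.
    move=> p i i' p4 i4 i'4 h1 h2.
    have := cov_match Hcov exy (lin x _) (lin y _) (lin y _) h1 h2.
    by move/linj/(congr1 (@nat_of_ord 4)); rewrite !inordK.
  move=> p p' i p4 p'4 i4 h1 h2.
  rewrite /Mn in h1 h2; rewrite (cov_sym Hcov) in h1; rewrite (cov_sym Hcov) in h2.
  have eyx : e y x by rewrite esym.
  have := cov_match Hcov eyx (lin y _) (lin x _) (lin x _) h1 h2.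
  by move/linj/(congr1 (@nat_of_ord 4)); rewrite !inordK.
have covM x y : e x y -> cov1 (Mn x y) by move=> exy; case: (pinjM x y exy) => ? ?; apply: ext.
have HFN t p i : p < 4 -> i < 4 -> Fn t p i -> exists2 u, u \in N t & Rn t u p i.
  move=> _ _ /existsP[u /and3P[uT etu ex]]; exists u => //; by rewrite inE etu.
have covF1 t : #|N t| <= 1 -> cov1 (Fn t).
  by move=> Nle; apply: (cov_from1 Nle (pinjR t)); apply: HFN.
have covF2 t : #|N t| <= 2 -> cov2 (Fn t).
  by move=> Nle; apply: (cov_from2 Nle (pinjR t)); apply: HFN.
have Hneg t (sg : 'S_4) s : (forall p, val (sg p) = ap s p) ->
    (forall p, p < 4 -> ~~ Fn t p (ap s p)) ->
    forall p u y, u \notin T -> e t u -> y \in t0 (sg p) -> y \in L u -> ~~ h (lab t p) y.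
  move=> Es Hs p u y uT etu yt yu; apply/negP => hy.
  have := Hs _ (ltn_ord p); rewrite -Es /Fn !inord_val => /negP; apply.
  apply/existsP; exists u; rewrite uT etu; apply/existsP; exists y; by rewrite yt yu hy.
have HM x y (sx sy : 'S_4) lx ly : (forall p, val (sx p) = ap lx p) -> (forall p, val (sy p) = ap ly p) ->
    (forall p q, p < 4 -> q < 4 -> Mn x y p q -> ap lx p != ap ly q) ->
    forall p q, h (lab x p) (lab y q) -> sx p != sy q.
  move=> Ex Ey Hs p q hpq; have := Hs _ _ (ltn_ord p) (ltn_ord q).
  rewrite /Mn !inord_val -Ex -Ey => /(_ hpq); apply: contra => /eqP -> //.
have nba : b != a by rewrite eq_sym.
have nca : c != a by rewrite eq_sym.
have ncb : c != b by rewrite eq_sym.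
have eba : e b a by rewrite esym.
have ecb : e c b by rewrite esym.
have Nb : #|N b| <= 1 by apply: (nb1 (Hdeg b bT) eba ebc nac).
have Tcase : forall (P : V -> Prop), P a -> P b -> P c -> forall x, x \in T -> P x.
  by move=> P0 Pa Pb Pc x; rewrite !inE => /orP[/orP[]|] /eqP ->.
case: Hac => [nac'|eac].
- have Na : #|N a| <= 2 by apply: (nb2 (Hdeg a aT) eab).
  have Nc : #|N c| <= 2 by apply: (nb2 (Hdeg c cT) ecb).
  have [sa [sb [sc [saP sbP scP [Ha [Hb Hc]] [Hab Hbc]]]]] :=
    core_P3 (covF2 _ Na) (covF1 _ Nb) (covF2 _ Nc) (covM _ _ eab) (covM _ _ ebc).
  have [ga Ea] := toS saP; have [gb Eb] := toS sbP; have [gc Ec] := toS scP.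
  pose sg x := if x == a then ga else if x == b then gb else gc.
  apply: (@assemble V W e h L T t0 lab sg Hcov I0 C0' D0 S0' linj lin).
  + move=> x p u y xT; move: x xT p u y.
    apply: (Tcase (fun x => forall p u y, u \notin T -> e x u -> y \in t0 (sg x p) -> y \in L u -> ~~ h (lab x p) y));
      rewrite /sg ?eqxx ?(negbTE nba) ?(negbTE nca) ?(negbTE ncb) ?eqxx.
    * exact: Hneg Ea Ha.
    * exact: Hneg Eb Hb.
    * exact: Hneg Ec Hc.
  + move=> x y p q; rewrite !inE => /orP[/orP[]|] /eqP Ex /orP[/orP[]|] /eqP Ey; subst x y;
      rewrite ?eqxx // /sg ?eqxx ?(negbTE nba) ?(negbTE nca) ?(negbTE ncb) => _.
    * exact: HM Ea Eb Hab p q.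
    * by move=> hh; move: (cov_non Hcov nac nac' (lin a p) (lin c q)); rewrite hh.
    * by move=> hh; rewrite eq_sym; apply: (HM _ _ _ _ _ _ Ea Eb Hab q p); rewrite (cov_sym Hcov).
    * exact: HM Eb Ec Hbc p q.
    * move=> hh; rewrite (cov_sym Hcov) in hh.
      by move: (cov_non Hcov nac nac' (lin a q) (lin c p)); rewrite hh.
    * by move=> hh; rewrite eq_sym; apply: (HM _ _ _ _ _ _ Eb Ec Hbc q p); rewrite (cov_sym Hcov).
- have eca : e c a by rewrite esym.
  have Na : #|N a| <= 1 by apply: (nb1 (Hdeg a aT) eab eac nbc).
  have Nc : #|N c| <= 1 by apply: (nb1 (Hdeg c cT) eca ecb nab).
  have [sa [sb [sc [saP sbP scP [Ha [Hb Hc]] [Hab [Hbc Hac]]]]]] :=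
    core_C3 (covF1 _ Na) (covF1 _ Nb) (covF1 _ Nc) (covM _ _ eab) (covM _ _ ebc) (covM _ _ eac).
  have [ga Ea] := toS saP; have [gb Eb] := toS sbP; have [gc Ec] := toS scP.
  pose sg x := if x == a then ga else if x == b then gb else gc.
  apply: (@assemble V W e h L T t0 lab sg Hcov I0 C0' D0 S0' linj lin).
  + move=> x p u y xT; move: x xT p u y.
    apply: (Tcase (fun x => forall p u y, u \notin T -> e x u -> y \in t0 (sg x p) -> y \in L u -> ~~ h (lab x p) y));
      rewrite /sg ?eqxx ?(negbTE nba) ?(negbTE nca) ?(negbTE ncb) ?eqxx.
    * exact: Hneg Ea Ha.
    * exact: Hneg Eb Hb.
    * exact: Hneg Ec Hc.
  + move=> x y p q; rewrite !inE => /orP[/orP[]|] /eqP Ex /orP[/orP[]|] /eqP Ey; subst x y;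
      rewrite ?eqxx // /sg ?eqxx ?(negbTE nba) ?(negbTE nca) ?(negbTE ncb) => _.
    * exact: HM Ea Eb Hab p q.
    * exact: HM Ea Ec Hac p q.
    * by move=> hh; rewrite eq_sym; apply: (HM _ _ _ _ _ _ Ea Eb Hab q p); rewrite (cov_sym Hcov).
    * exact: HM Eb Ec Hbc p q.
    * by move=> hh; rewrite eq_sym; apply: (HM _ _ _ _ _ _ Ea Ec Hac q p); rewrite (cov_sym Hcov).
    * by move=> hh; rewrite eq_sym; apply: (HM _ _ _ _ _ _ Eb Ec Hbc q p); rewrite (cov_sym Hcov).
Qed.
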